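(* Let $d$ and $p$ be integers with $d>p\ge 2$ and let \[ f_{d,p}(m)=\sum_{j=1}^{p}\binom{j+m-2}{j-1}\binom{d-j+m}{d-j}, \] a polynomial of degree $d-1$ in $m$. Let $\mathbf{V}(f_{d,p})=\{a\in\mathbb{C}: f_{d,p}(a)=0\}$. Then \[ \{-1,-2,\ldots,-(d-p)\}\subset \mathbf{V}(f_{d,p})\cap\mathbb{R}\subset[-(d-2),0). \]
   Context: For an integer $a\ge 0$, $\binom{a+x}{a}$ denotes the polynomial $\prod_{i=1}^{a}(x+i)/a!$ in $x$; so $\binom{j+m-2}{j-1}=\prod_{i=0}^{j-2}(m+i)/(j-1)!$ and $\binom{d-j+m}{d-j}=\prod_{i=1}^{d-j}(m+i)/(d-j)!$. *)

(* Defs.v *)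
From mathcomp Require Import all_boot all_order all_algebra.
Set Implicit Arguments. Unset Strict Implicit. Unset Printing Implicit Defensive.
Import Order.TTheory GRing.Theory Num.Theory.
Local Open Scope ring_scope.

(* binom_poly a b == the polynomial (prod_(i=b)^(b+a-1) (x + i)) / a!  in x.
   With b = 1 this is  binom(a + x, a)  as in the paper;
   with b = 0 and a = j-1 it is  binom(j + x - 2, j - 1). *)
Definition binom_poly (F : fieldType) (a b : nat) : {poly F} :=
  (a`!%:R)^-1 *: \prod_(b <= i < b + a) ('X + i%:R%:P).

Definition fdp (F : fieldType) (d p : nat) : {poly F} :=
  \sum_(1 <= j < p.+1) (binom_poly F (j - 1) 0 * binom_poly F (d - j) 1).

(* Main.v *)
Require Import Defs.
From mathcomp Require Import all_boot all_order all_algebra.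
From mathcomp Require Import ring zify.
Import Order.TTheory GRing.Theory Num.Theory.
Local Open Scope ring_scope.

Section Aux.
Variable C : numClosedFieldType.

Lemma hornerBP (n b : nat) (x : C) :
  (binom_poly C n b).[x] = (n`!%:R)^-1 * \prod_(b <= i < b + n) (x + i%:R).
Proof.
rewrite /binom_poly hornerZ horner_prod; congr (_ * _).
by apply: eq_bigr => i _; rewrite hornerD hornerX hornerC.
Qed.

Lemma fdpE (d p : nat) (x : C) :
  (fdp C d p).[x] = \sum_(1 <= j < p.+1)
     ((binom_poly C (j - 1) 0).[x] * (binom_poly C (d - j) 1).[x]).
Proof.
rewrite /fdp horner_sum; apply: eq_bigr => j _; by rewrite hornerM.
Qed.

Lemma prod_neg (x : C) (b n : nat) :
  (forall i, (b <= i < b + n)%N -> x + i%:R < 0) ->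
  0 < (-1) ^+ n * \prod_(b <= i < b + n) (x + i%:R).
Proof.
elim: n => [|n IH] H.
  by rewrite addn0 big_geq // expr0 mulr1 ltr01.
rewrite addnS big_nat_recr ?leq_addr //= exprS.
have -> : -1 * (-1) ^+ n * (\prod_(b <= i < b + n) (x + i%:R) * (x + (b + n)%:R))
   = ((-1) ^+ n * \prod_(b <= i < b + n) (x + i%:R)) * (- (x + (b + n)%:R)) by ring.
apply: mulr_gt0.
  apply: IH => i /andP [h1 h2]; apply: H; rewrite h1 /=; by rewrite addnS ltnW.
rewrite oppr_gt0; apply: H; by rewrite leq_addr /= addnS ltnSn.
Qed.

Lemma prod_ge0 (x : C) (b n : nat) : 0 <= x ->
  0 <= \prod_(b <= i < b + n) (x + i%:R).
Proof. move=> x0; apply: prodr_ge0 => i _; by rewrite addr_ge0 ?ler0n. Qed.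

Lemma prod_gt0 (x : C) (n : nat) : 0 <= x ->
  0 < \prod_(1 <= i < 1 + n) (x + i%:R).
Proof.
move=> x0; rewrite big_nat; apply: prodr_gt0 => i /andP [h _].
by apply: ltr_wpDl => //; rewrite ltr0n.
Qed.

Lemma neg_help (a : C) (n i : nat) : a < -(n.+1)%:R -> (i <= n.+1)%N -> a + i%:R < 0.
Proof.
move=> ha hi.
have h1 : a + i%:R < -(n.+1)%:R + i%:R by rewrite ltrD2r.
apply: (lt_le_trans h1); by rewrite addrC subr_le0 ler_nat.
Qed.

Lemma rearr (ea eb A P1 B P2 : C) :
  ea * eb * (A * P1 * (B * P2)) = (A * B) * ((ea * P1) * (eb * P2)).
Proof. ring. Qed.

End Aux.

Theorem theorem2p5 (C : numClosedFieldType) (d p : nat) :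
  (2 <= p)%N -> (p < d)%N ->
  (forall k : nat, (1 <= k <= d - p)%N -> root (fdp C d p) (- k%:R)) /\
  (forall a : C, a \is Num.real -> root (fdp C d p) a ->
     - (d - 2)%:R <= a /\ a < 0).
Proof.
move=> hp hpd; split.
  move=> k /andP [k1 kd]; rewrite /root fdpE; apply/eqP.
  rewrite big_nat big1 // => j /andP [j1 jp].
  rewrite (hornerBP _ (d - j)) (bigD1_seq k) /=.
  - by rewrite addNr mul0r mulr0 mulr0.
  - rewrite mem_index_iota k1 /= add1n ltnS; apply: (leq_trans kd).
    by rewrite leq_sub2l.
  - exact: iota_uniq.
move=> a ra ha.
have f0 : (fdp C d p).[a] = 0 by apply/eqP.
have [n dn] : exists n, d = n.+3.
  exists (d - 3)%N; move: hp hpd; clear; lia.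
subst d.
have alt0 : a < 0.
  rewrite real_ltNge ?real0 //; apply/negP => a0.
  move: f0; rewrite fdpE big_ltn; last by move: hp; clear; lia.
  move=> /eqP; apply/negP; rewrite gt_eqF //.
  apply: ltr_wpDr.
    apply: sumr_ge0 => j _; rewrite !hornerBP.
    by apply: mulr_ge0; apply: mulr_ge0; rewrite ?invr_ge0 ?ler0n ?prod_ge0.
  rewrite !hornerBP subnn big_geq // fact0 invr1 mul1r mul1r.
  by apply: mulr_gt0; rewrite ?invr_gt0 ?ltr0n ?fact_gt0 ?prod_gt0.
split => //.
rewrite (_ : (n.+3 - 2 = n.+1)%N) // real_leNgt ?rpredN ?realn //; apply/negP => alt.
have : 0 < (-1) ^+ n.+2 * (fdp C n.+3 p).[a].
  rewrite fdpE big_ltn; last by move: hp; clear; lia.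
  rewrite big_ltn; last by move: hp; clear; lia.
  rewrite mulrDr mulrDr addrA mulr_sumr.
  apply: ltr_wpDr.
    rewrite big_nat; apply: sumr_ge0 => j /andP [j3 jp]; rewrite !hornerBP; apply: ltW.
    have e : (-1) ^+ n.+2 = (-1) ^+ (j - 1) * (-1) ^+ (n.+3 - j) :> C.
      by rewrite -exprD; congr (_ ^+ _); move: j3 jp hpd; clear; lia.
    rewrite e rearr; apply: mulr_gt0.
      by apply: mulr_gt0; rewrite invr_gt0 ltr0n fact_gt0.
    apply: mulr_gt0; apply: prod_neg => i /andP [_ hi]; apply: (@neg_help C a n _ alt);
      move: hi j3 jp hpd; clear; lia.
  rewrite subnn (_ : (2 - 1 = 1)%N) // (_ : (n.+3 - 1 = n.+2)%N) //.
  rewrite (_ : (n.+3 - 2 = n.+1)%N) // !hornerBP big_geq // add0n big_nat1.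
  rewrite (addnS 1 n.+1) big_nat_recr //.
  set Q := \prod_(1 <= i < 1 + n.+1) (a + i%:R).
  rewrite !factS fact0.
  rewrite /=.
  have key : (-1) ^+ n.+2 *
   (1^-1 * 1 * ((n.+2 * (n.+1 * n`!))%:R^-1 * (Q * (a + (1 + n.+1)%:R)))) +
   (-1) ^+ n.+2 * ((1 * 1)%:R^-1 * (a + 0) * ((n.+1 * n`!)%:R^-1 * Q)) =
   ((-1) ^+ n.+1 * Q) * ((n.+2 * (n.+1 * n`!))%:R^-1 * (- (a * (n.+3)%:R + (n.+2)%:R))).
    rewrite exprS; move: ((-1) ^+ n.+1) => s; rewrite !natrM.
    field.
    by rewrite pnatr_eq0 -lt0n fact_gt0 -(natrD _ 1 n) -(natrD _ 2 n) !pnatr_eq0.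
  rewrite key; apply: mulr_gt0.
    rewrite /Q; apply: prod_neg => i /andP [_ hi]; apply: (@neg_help C a n _ alt).
    by move: hi; clear; lia.
  apply: mulr_gt0; first by rewrite invr_gt0 ltr0n !muln_gt0 fact_gt0.
  rewrite oppr_gt0.
  have eq : a * n.+3%:R + n.+2%:R = (a + n.+1%:R) * n.+3%:R - (n * n + 3 * n + 1)%:R :> C.
    by rewrite !natrD !natrM; ring.
  rewrite eq subr_lt0; apply: (lt_le_trans _ (ler0n _ _)).
  by rewrite pmulr_llt0 ?ltr0n //; exact: (@neg_help C a n n.+1 alt (leqnn _)).
by rewrite f0 mulr0 ltxx.
Qed.
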